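(* Let $\sigma$ be a signature including $\{\triangleright, ;\}$ and let $\mathcal{A}$ be a $\sigma$-algebra that is representable by partial functions and whose atoms are separating. Let $\varphi$ be the first-order sentence asserting: for all $a,b,c$, if $c\ge a;x$ for every atom $x$ with $x\le b$, then $c\ge a;b$. Then composition in $\mathcal{A}$ is completely left-distributive over joins if and only if $\mathcal{A}\models\varphi$.
   Context: Signatures $\sigma$ are sets of operation symbols drawn from: $\triangleright$ (antidomain restriction), $;$ (composition), $\wedge$ (intersection), $\mathrm{upd}$ (update), $\sqcup$ (preferential union), $\mathsf{D}$ (domain), $\mathsf{A}$ (antidomain), interpreted on partial functions as: $f \triangleright g = \{(x,y) \in g : x \notin \mathrm{dom}(f)\}$; $f;g=\{(x,z):\exists y\,((x,y)\in f,(y,z)\in g)\}$; $f\wedge g = f\cap g$; $\mathrm{upd}(f,g)(x)$ is $f(x)$ if $f(x)$ defined and $g(x)$ undefined, $g(x)$ if both defined, undefined otherwise; $(f\sqcup g)(x)$ is $f(x)$ if defined, else $g(x)$; $\mathsf{D}(f)$ = identity on $\mathrm{dom}(f)$; $\mathsf{A}(f)$ = identity on the complement of $\mathrm{dom}(f)$ in the base. $\mathcal{A}$ is representable if isomorphic to a $\sigma$-algebra of partial functions with these operations. Define $0 := a\triangleright a$, $a\lhd b := (a\triangleright b)\triangleright b$, $a \le b :\iff a\lhd b = a$. An atom is a minimal nonzero element (expressible in first-order logic); atoms are separating if whenever $a\not\le b$ there is an atom $c\le a$ with $c\not\le b$. Composition is completely left-distributive over joins if for every $S$ with $\bigvee S$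 existing and every $a$, $\bigvee\{a;s:s\in S\}$ exists and equals $a;\bigvee S$. *)

(* Defs.v *)
Inductive sym : Type :=
  | SAntidomRestr  (* antidomain restriction  f |> g *)
  | SComp
  | SInter
  | SUpd
  | SPref
  | SDom
  | SAntidom.

Definition signature := sym -> Prop.

(* An algebra carrying (interpretations of) all seven symbols; for a
   sigma-algebra only the symbols in sigma matter (the others are ignored
   by every notion below except representability, which only constrains
   symbols in sigma). *)
Record salg : Type := SAlg {
  carrier :> Type;
  op_ares : carrier -> carrier -> carrier;
  op_comp : carrier -> carrier -> carrier;
  op_inter : carrier -> carrier -> carrier;
  op_upd : carrier -> carrier -> carrier;
  op_pref : carrier -> carrier -> carrier;
  op_dom : carrier -> carrier;
  op_adom : carrier -> carrier
}.

Definition pfun (X : Type) := X -> option X.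

Definition pf_ares {X} (f g : pfun X) : pfun X :=
  fun x => match f x with Some _ => None | None => g x end.
Definition pf_comp {X} (f g : pfun X) : pfun X :=
  fun x => match f x with Some y => g y | None => None end.
(* intersection specified relationally (avoids decidable equality on X) *)
Definition pf_is_inter {X} (f g k : pfun X) : Prop :=
  forall x y, k x = Some y <-> (f x = Some y /\ g x = Some y).
Definition pf_upd {X} (f g : pfun X) : pfun X :=
  fun x => match f x with
           | None => None
           | Some y => match g x with Some z => Some z | None => Some y end
           end.
Definition pf_pref {X} (f g : pfun X) : pfun X :=
  fun x => match f x with Some y => Some y | None => g x end.
Definition pf_dom {X} (f : pfun X) : pfun X :=
  fun x => match f x with Some _ => Some x | None => None end.
Definition pf_adom {X} (f : pfun X) : pfun X :=
  fun x => match f x with Some _ => None | None => Some x end.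

Definition pf_eq {X} (f g : pfun X) : Prop := forall x, f x = g x.

Definition representable (sg : signature) (A : salg) : Prop :=
  exists (X : Type) (h : A -> pfun X),
    (forall a b, pf_eq (h a) (h b) -> a = b) /\
    (sg SAntidomRestr -> forall a b, pf_eq (h (op_ares A a b)) (pf_ares (h a) (h b))) /\
    (sg SComp -> forall a b, pf_eq (h (op_comp A a b)) (pf_comp (h a) (h b))) /\
    (sg SInter -> forall a b, pf_is_inter (h a) (h b) (h (op_inter A a b))) /\
    (sg SUpd -> forall a b, pf_eq (h (op_upd A a b)) (pf_upd (h a) (h b))) /\
    (sg SPref -> forall a b, pf_eq (h (op_pref A a b)) (pf_pref (h a) (h b))) /\
    (sg SDom -> forall a, pf_eq (h (op_dom A a)) (pf_dom (h a))) /\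
    (sg SAntidom -> forall a, pf_eq (h (op_adom A a)) (pf_adom (h a))).

Section Derived.
Variable A : salg.

Definition zero_of (a : A) : A := op_ares A a a.
Definition nonzero (a : A) : Prop := a <> zero_of a.
Definition lhd (a b : A) : A := op_ares A (op_ares A a b) b.
Definition le (a b : A) : Prop := lhd a b = a.

Definition atom (x : A) : Prop :=
  nonzero x /\ forall y, nonzero y -> le y x -> y = x.

Definition separating_atoms : Prop :=
  forall a b, ~ le a b -> exists c, atom c /\ le c a /\ ~ le c b.

Definition is_join (S : A -> Prop) (j : A) : Prop :=
  (forall s, S s -> le s j) /\
  (forall u, (forall s, S s -> le s u) -> le j u).

Definition comp_completely_left_distributive : Prop :=
  forall (S : A -> Prop) (j : A) (a : A),
    is_join S j ->
    is_join (fun t => exists s, S s /\ t = op_comp A a s) (op_comp A a j).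

Definition phi_holds : Prop :=
  forall a b c : A,
    (forall x, atom x -> le x b -> le (op_comp A a x) c) ->
    le (op_comp A a b) c.

End Derived.

(* Main.v *)
Require Import Defs.
From Stdlib Require Import Classical.

Theorem lemma7p3 (sg : signature) (A : salg) :
  sg SAntidomRestr -> sg SComp ->
  representable sg A ->
  separating_atoms A ->
  (comp_completely_left_distributive A <-> phi_holds A).
Proof.
  intros Hr Hc [X [h [Hinj [Har [Hcm _]]]]] Hsep.
  specialize (Har Hr). specialize (Hcm Hc).
  assert (Hle : forall a b, le A a b <->
            (forall p y, h a p = Some y -> h b p = Some y)).
  { intros a b; unfold le, lhd; split.
    - intros E p y Hy. rewrite <- E in Hy. rewrite Har in Hy.
      unfold pf_ares in Hy. rewrite Har in Hy. unfold pf_ares in Hy.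
      destruct (h a p); [|destruct (h b p); discriminate].
      exact Hy.
    - intros H. apply Hinj. intro p. rewrite Har. unfold pf_ares.
      rewrite Har. unfold pf_ares.
      destruct (h a p) eqn:E.
      + apply H in E. exact E.
      + destruct (h b p); reflexivity. }
  assert (Hnz : forall z p y, h z p = Some y -> nonzero A z).
  { intros z p y Hy E. unfold zero_of in E.
    pose proof (f_equal (fun w => h w p) E) as F. simpl in F.
    rewrite Har in F. unfold pf_ares in F. rewrite Hy in F. discriminate. }
  assert (Hnz2 : forall z, nonzero A z -> exists p y, h z p = Some y).
  { intros z Hz. apply NNPP. intro N. apply Hz. apply Hinj. intro p.
    unfold zero_of. rewrite Har. unfold pf_ares. destruct (h z p) eqn:E.
    - exfalso. apply N. eauto.
    - reflexivity. }
  split.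
  - intros Hcld a b c Hx.
    assert (Hj : is_join A (fun x => atom A x /\ le A x b) b).
    { split.
      - intros s [_ Hs]; exact Hs.
      - intros u Hu. apply NNPP. intro N.
        destruct (Hsep _ _ N) as [c0 [Ha [Hcb Hcu]]].
        apply Hcu. apply Hu. auto. }
    destruct (Hcld _ _ a Hj) as [_ Hl]. apply Hl.
    intros t [s [[Hs1 Hs2] ->]]. apply Hx; auto.
  - intros Hphi S j a [Hup Hlst]. split.
    + intros t [s [Hs ->]]. apply Hle. intros p z Hz.
      rewrite Hcm in Hz |- *. unfold pf_comp in *.
      destruct (h a p); [|discriminate].
      apply (proj1 (Hle _ _) (Hup s Hs)). exact Hz.
    + intros u Hu. apply Hphi. intros x Hx Hxj.
      assert (Hex : exists s, S s /\ le A x s).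
      { apply NNPP. intro N.
        assert (Hub : forall s, S s -> le A s (op_ares A x j)).
        { intros s Hs. apply Hle. intros p y Hy.
          rewrite Har. unfold pf_ares.
          pose proof (proj1 (Hle _ _) (Hup s Hs) p y Hy) as Hjp.
          destruct (h x p) eqn:Exp.
          - exfalso. apply N. exists s. split; [exact Hs|].
            assert (E : lhd A s x = x).
            { apply (proj2 Hx).
              - apply (Hnz _ p x0). unfold lhd. rewrite Har. unfold pf_ares.
                rewrite Har. unfold pf_ares. rewrite Hy. exact Exp.
              - apply Hle. intros q z Hq. unfold lhd in Hq.
                rewrite Har in Hq. unfold pf_ares in Hq.
                rewrite Har in Hq. unfold pf_ares in Hq.
                destruct (h s q); [exact Hq|destruct (h x q); discriminate]. }
            apply Hle. intros q z Hq.
            pose proof Hq as Hq'. rewrite <- E in Hq'. unfold lhd in Hq'.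
            rewrite Har in Hq'. unfold pf_ares in Hq'.
            rewrite Har in Hq'. unfold pf_ares in Hq'.
            destruct (h s q) as [c0|] eqn:Esq; [|destruct (h x q); discriminate].
            pose proof (proj1 (Hle _ _) Hxj q z Hq) as J1.
            pose proof (proj1 (Hle _ _) (Hup s Hs) q c0 Esq) as J2.
            rewrite J1 in J2. injection J2 as ->. reflexivity.
          - exact Hjp. }
        pose proof (Hlst _ Hub) as Hjx.
        destruct (Hnz2 x (proj1 Hx)) as [p [y Hy]].
        pose proof (proj1 (Hle _ _) Hxj p y Hy) as Hjp.
        pose proof (proj1 (Hle _ _) Hjx p y Hjp) as Hc2.
        rewrite Har in Hc2. unfold pf_ares in Hc2. rewrite Hy in Hc2. discriminate. }
      destruct Hex as [s [Hs Hxs]].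
      assert (Hus : le A (op_comp A a s) u) by (apply Hu; eauto).
      apply Hle. intros p z Hz. apply (proj1 (Hle _ _) Hus).
      rewrite Hcm in Hz |- *. unfold pf_comp in *.
      destruct (h a p); [|discriminate].
      apply (proj1 (Hle _ _) Hxs). exact Hz.
Qed.
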